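(* Let $\mathcal{P}=\{P_1,\ldots,P_n\}$ and let $\mathcal{F}\subseteq 2^{\mathcal{P}}$ be a fail-prone system. Consider the ideal $I=\langle \xi_{\mathcal{F}_{\bar X}},\ \xi_{\mathcal{F}_{\bar Y}},\ \xi_{\mathcal{F}_{\bar T}},\ \omega\rangle\subseteq\mathbb{B}(\bar X,\bar Y,\bar T)$ and let $\mathcal{G}$ be a Gröbner basis for $I$. If $|SM(\mathcal{G})|=|\varphi(\mathcal{F})|^3$, then $\mathcal{F}$ satisfies the $Q^3$-condition, i.e. $\mathcal{P}\not\subseteq F_1\cup F_2\cup F_3$ for all $F_1,F_2,F_3\in\mathcal{F}$.
   Context: $\mathbb{B}=\mathbb{F}_2$; $\mathbb{B}(\bar X,\bar Y,\bar T)$ is the Boolean polynomial ring $\mathbb{B}[X_1,\ldots,X_n,Y_1,\ldots,Y_n,T_1,\ldots,T_n]$ modulo $\langle X_i^2-X_i,Y_i^2-Y_i,T_i^2-T_i\rangle$. $\varphi:2^{\mathcal{P}}\to\mathbb{B}^n$ sends a set to its indicator vector, $\varphi(\mathcal{F})=\{\varphi(F):F\in\mathcal{F}\}$. For $S\subseteq\mathcal{P}$, $\xi_S(\bar Z)=\prod_{i=1}^n(1+Z_i+\varphi(S)_i)$; for $\mathcal{A}\subseteq 2^{\mathcal{P}}$, $\xi_{\mathcal{A}_{\bar Z}}=\prod_{A\in\mathcal{A}}(\xi_A(\bar Z)+1)$. $\omega(\bar X,\bar Y,\bar T)=\prod_{i=1}^n(X_iY_iT_i+X_iY_i+X_iT_i+Y_iT_i+X_i+Y_i+T_i)$.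 A fail-prone system is a collection of subsets of $\mathcal{P}$ none of which is contained in another. Monomial order: lexicographic with block order $\bar T<\bar Y<\bar X$ and within blocks $X_n\prec\cdots\prec X_1$ etc. A Gröbner basis of $I$ is a generating set $\mathcal{G}$ such that every nonzero $f\in I$ has leading monomial divisible by that of some $g\in\mathcal{G}$; $SM(\mathcal{G})$ is the set of multilinear monomials not in the ideal generated by the leading monomials of elements of $I$. *)

(* Defs.v *)
(* Boolean polynomial ring B(X,Y,T) = F_2[X,Y,T]/<Z^2-Z>,
   represented by its canonical multilinear representatives:
   a multilinear monomial is a set of variables, a Boolean polynomial is the
   set of monomials occurring with coefficient 1. *)
From mathcomp Require Import all_boot.
Set Implicit Arguments. Unset Strict Implicit. Unset Printing Implicit Defensive.

Section Boolean.
Variable n : nat.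

(* Variables: (0,i) = X_{i+1}, (1,i) = Y_{i+1}, (2,i) = T_{i+1}. *)
Definition var := ('I_3 * 'I_n)%type.
Definition Xv (i : 'I_n) : var := (inord 0, i).
Definition Yv (i : 'I_n) : var := (inord 1, i).
Definition Tv (i : 'I_n) : var := (inord 2, i).

Definition bmon := {set var}.
Definition bpoly := {set bmon}.

Definition bzero : bpoly := set0.
Definition bone : bpoly := [set set0].
Definition bconst (b : bool) : bpoly := if b then bone else bzero.
Definition bvar (v : var) : bpoly := [set [set v]].
Definition badd (p q : bpoly) : bpoly := (p :\: q) :|: (q :\: p).
(* product: monomials multiply by union (since Z^2 = Z), coefficients mod 2 *)
Definition bmul (p q : bpoly) : bpoly :=
  [set c | odd #|[set ab in setX p q | ab.1 :|: ab.2 == c]|].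
Definition bprod (s : seq bpoly) : bpoly := foldr bmul bone s.

(* sum over s in S of h s * s *)
Definition bcomb (S : pred bpoly) (h : {ffun bpoly -> bpoly}) : bpoly :=
  [set c | odd #|[set s : bpoly | S s & c \in bmul (h s) s]|].

Definition in_ideal (S : pred bpoly) (f : bpoly) : bool :=
  [exists h : {ffun bpoly -> bpoly}, f == bcomb S h].

(* monomial order: lex, block order T < Y < X, X_n < ... < X_1 etc. *)
Definition rk (v : var) : nat := (2 - v.1) * n + (n - 1 - v.2).
Definition lexlt (a b : bmon) : bool :=
  [exists v, [&& v \in b, v \notin a &
     [forall w, (rk v < rk w) ==> ((w \in a) == (w \in b))]]].
Definition is_lead (f : bpoly) (a : bmon) : bool :=
  (a \in f) && [forall b in f, (b == a) || lexlt b a].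
Definition bdivides (a b : bmon) : bool := a \subset b.

Definition groebner_basis (inI : pred bpoly) (G : seq bpoly) : Prop :=
  (forall f, in_ideal (mem G) f = inI f) /\
  (forall f, inI f -> f != bzero ->
     exists2 g, g \in G &
       exists a b, [/\ is_lead g a, is_lead f b & bdivides a b]).

(* SM(G): multilinear monomials not in the ideal generated by the leading
   monomials of elements of the ideal I (with membership inI). *)
Definition SM (inI : pred bpoly) : {set bmon} :=
  [set a : bmon | ~~ in_ideal
     [pred p : bpoly | [exists f, inI f && [exists b, is_lead f b && (p == [set b])]]]
     [set a]].

Definition phi (S : {set 'I_n}) : {ffun 'I_n -> bool} := [ffun i => i \in S].

Definition xi (Z : 'I_n -> var) (S : {set 'I_n}) : bpoly :=
  bprod [seq badd (badd bone (bvar (Z i))) (bconst (phi S i)) | i <- enum 'I_n].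
Definition xiF (Z : 'I_n -> var) (F : {set {set 'I_n}}) : bpoly :=
  bprod [seq badd (xi Z A) bone | A <- enum F].

Definition omega : bpoly :=
  bprod [seq
    let x := bvar (Xv i) in let y := bvar (Yv i) in let t := bvar (Tv i) in
    badd (badd (badd (badd (badd (badd (bmul (bmul x y) t) (bmul x y))
      (bmul x t)) (bmul y t)) x) y) t
  | i <- enum 'I_n].

Definition idealI (F : {set {set 'I_n}}) : pred bpoly :=
  in_ideal (mem [:: xiF Xv F; xiF Yv F; xiF Tv F; omega]).

Definition fail_prone (F : {set {set 'I_n}}) : Prop :=
  forall A B, A \in F -> B \in F -> A \subset B -> A = B.

Definition Q3 (F : {set {set 'I_n}}) : Prop :=
  forall F1 F2 F3, F1 \in F -> F2 \in F -> F3 \in F ->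
    ~~ ([set: 'I_n] \subset F1 :|: F2 :|: F3).

End Boolean.

(* Main.v *)
Require Import Defs.
From mathcomp Require Import all_boot zify.
Set Implicit Arguments. Unset Strict Implicit. Unset Printing Implicit Defensive.

Lemma odd_sumb (I : finType) (P : pred I) (F : I -> nat) :
  odd (\sum_(i | P i) F i) = odd (\sum_(i | P i) (odd (F i) : nat)).
Proof.
apply: (big_rec2 (fun a b => odd a = odd b)) => // i a b _ IH.
by rewrite !oddD IH oddb.
Qed.

Lemma card_odd_sum (I : finType) (P : pred I) (F : I -> nat) :
  odd #|[set i | P i & odd (F i)]| = odd (\sum_(i | P i) F i).
Proof.
rewrite odd_sumb -sum1dep_card big_mkcondr /=.
by apply: congr1; apply: eq_bigr => i _; case: (odd (F i)).
Qed.

Lemma odd_card_sym (T : finType) (A B : {set T}) :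
  odd #|(A :\: B) :|: (B :\: A)| = odd #|A| (+) odd #|B|.
Proof.
have dis : (A :\: B) :&: (B :\: A) = set0.
  by apply/setP => x; rewrite !inE; case: (x \in A); case: (x \in B).
have := cardsUI (A :\: B) (B :\: A); rewrite dis cards0 addn0 => ->.
rewrite -(cardsID B A) -(cardsID A B) setIC !oddD.
by case: (odd #|A :\: B|); case: (odd #|B :\: A|); case: (odd #|B :&: A|).
Qed.

Definition ev n (p : bpoly n) (x : {set var n}) : bool :=
  odd #|[set m in p | m \subset x]|.

Lemma ev_add n (p q : bpoly n) x : ev (badd p q) x = ev p x (+) ev q x.
Proof.
rewrite /ev -odd_card_sym; apply: congr1; apply: eq_card => m; rewrite !inE.
by case: (m \in p); case: (m \in q); case: (m \subset x).
Qed.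

Lemma ev_inj n (p q : bpoly n) : (forall x, ev p x = ev q x) -> p = q.
Proof.
move=> H.
have Hr : forall x, ev (badd p q) x = false by move=> x; rewrite ev_add H addbb.
suff r0 : badd p q = set0.
  apply/setP => m; have := congr1 (fun s : bpoly n => m \in s) r0.
  rewrite !inE; by case: (m \in p); case: (m \in q).
apply/eqP; apply/negPn/negP => /set0Pn [m0 Hm0].
case: (arg_minnP (fun m : bmon n => #|m|) Hm0) => m Hm Hmin.
have E : [set m' in badd p q | m' \subset m] = [set m].
  apply/setP => m'; rewrite in_set1 in_set.
  case: (boolP (m' == m)) => [/eqP ->|ne]; first by apply/andP; split; [exact: Hm | exact: subxx].
  apply/negP => /andP [Hm' Hs]; move/negP: ne; apply.
  rewrite eqEcard Hs; exact: Hmin.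
by have := Hr m; rewrite /ev E cards1.
Qed.

Lemma ev_mul n (p q : bpoly n) x : ev (bmul p q) x = ev p x && ev q x.
Proof.
pose U (ab : bmon n * bmon n) := ab.1 :|: ab.2.
pose N (c : bmon n) := #|[set ab in setX p q | U ab == c]|.
have E1 : [set c in bmul p q | c \subset x] = [set c : bmon n | c \subset x & odd (N c)].
  by apply/setP => c; rewrite !inE andbC.
rewrite /ev E1 card_odd_sum.
have E2 : \sum_(c : bmon n | c \subset x) N c = #|[set ab in setX p q | U ab \subset x]|.
  rewrite -sum1dep_card (partition_big U (fun c : bmon n => c \subset x)); last by move=> i /andP[].
  apply: eq_bigr => c Hc; rewrite sum1dep_card /N; apply: eq_card => ab; rewrite !inE.
  case: (boolP (U ab == c)) => [/eqP ->|]; last by rewrite !andbF.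
  by move: Hc; case: (c \subset x) => // _; rewrite !andbT.
rewrite E2.
have E3 : [set ab in setX p q | U ab \subset x] =
   setX [set a in p | a \subset x] [set b in q | b \subset x].
  apply/setP => [[a b]]; rewrite !inE /U /= subUset.
  by case: (a \in p); case: (b \in q); case: (a \subset x).
by rewrite E3 cardsX oddM.
Qed.

Lemma ev_bcomb n (S : pred (bpoly n)) h x :
  ev (bcomb S h) x = odd (\sum_(s | S s) (ev (h s) x && ev s x)).
Proof.
pose B s := bmul (h s) s.
pose M (c : bmon n) := #|[set s : bpoly n | S s & c \in B s]|.
have E1 : [set c in bcomb S h | c \subset x] = [set c : bmon n | c \subset x & odd (M c)].
  by apply/setP => c; rewrite !inE andbC.
rewrite /ev E1 card_odd_sum.
transitivity (odd (\sum_(s | S s) #|[set c in B s | c \subset x]|)); last first.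
  rewrite odd_sumb; congr (odd _); apply: eq_bigr => s _.
  by rewrite -ev_mul.
congr (odd _).
transitivity (\sum_(c : bmon n | c \subset x) \sum_(s | S s) (if c \in B s then 1 else 0)).
  apply: eq_bigr => c _; rewrite /M -sum1dep_card big_mkcondr /=.
  done.
rewrite exchange_big; apply: eq_bigr => s _.
rewrite -big_mkcondr sum1dep_card; apply: eq_card => c; rewrite !inE andbC //.
Qed.

Lemma ev_one n x : ev (@bone n) x = true.
Proof.
rewrite /ev (_ : [set m in @bone n | m \subset x] = [set set0]) ?cards1 //.
apply/setP => m; rewrite !inE; case: (boolP (m == set0)) => // /eqP ->.
by rewrite sub0set.
Qed.

Lemma ev_zero n x : ev (@bzero n) x = false.
Proof.
by rewrite /ev (_ : [set m in @bzero n | m \subset x] = set0) ?cards0 //; apply/setP => m; rewrite !inE.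
Qed.

Lemma ev_var n v x : ev (@bvar n v) x = (v \in x).
Proof.
rewrite /ev; case: (boolP (v \in x)) => Hv.
  rewrite (_ : [set m in @bvar n v | m \subset x] = [set [set v]]) ?cards1 //.
  apply/setP => m; rewrite !inE; case: (boolP (m == [set v])) => // /eqP ->.
  by rewrite sub1set.
rewrite (_ : [set m in @bvar n v | m \subset x] = set0) ?cards0 //.
apply/setP => m; rewrite !inE; case: (boolP (m == [set v])) => // /eqP ->.
by rewrite sub1set (negbTE Hv).
Qed.

Lemma ev_const n b x : ev (@bconst n b) x = b.
Proof. by case: b; rewrite /bconst ?ev_one ?ev_zero. Qed.

Lemma ev_prod n (s : seq (bpoly n)) x : ev (bprod s) x = all (fun p => ev p x) s.
Proof. by elim: s => [|p s IH] /=; rewrite ?ev_one // ev_mul IH. Qed.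

Definition partZ n (Z : 'I_n -> var n) (x : {set var n}) : {set 'I_n} :=
  [set i | Z i \in x].

Lemma ev_xi n (Z : 'I_n -> var n) S x : ev (xi Z S) x = (partZ Z x == S).
Proof.
rewrite /xi ev_prod all_map.
apply/allP/eqP => [H|<-].
  apply/setP => i; have := H i (mem_enum _ i).
  rewrite /= !ev_add ev_one ev_var ev_const /phi ffunE !inE.
  by case: (Z i \in x); case: (i \in S).
move=> i _ /=; rewrite !ev_add ev_one ev_var ev_const /phi ffunE !inE.
by case: (Z i \in x).
Qed.

Lemma ev_xiF n (Z : 'I_n -> var n) F x : ev (xiF Z F) x = (partZ Z x \notin F).
Proof.
rewrite /xiF ev_prod all_map.
apply/allP/idP => [H|H A]; last first.
  rewrite mem_enum /= ev_add ev_one ev_xi addbT => HA; apply/eqP => E.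
  by rewrite E HA in H.
apply/negP => HF; have := H (partZ Z x); rewrite mem_enum HF.
by rewrite /= ev_add ev_one ev_xi eqxx => /(_ isT).
Qed.

Lemma ev_omega n x : ev (@omega n) x =
  [forall i, [|| Xv i \in x, Yv i \in x | Tv i \in x]].
Proof.
rewrite /omega ev_prod all_map.
apply/allP/forallP => [H i|H i _] /=.
  have := H i (mem_enum _ i); rewrite /= !ev_add !ev_mul !ev_var.
  by case: (Xv i \in x); case: (Yv i \in x); case: (Tv i \in x).
have := H i; rewrite /= !ev_add !ev_mul !ev_var.
by case: (Xv i \in x); case: (Yv i \in x); case: (Tv i \in x).
Qed.

Lemma ev_surj n (f : {ffun {set var n} -> bool}) : exists p : {set bmon n}, forall x, ev p x = f x.
Proof.
pose E (p : bpoly n) := [ffun x => ev p x].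
have Einj : injective E.
  move=> p q H; apply: ev_inj => x.
  by have := congr1 (fun g : {ffun {set var n} -> bool} => g x) H; rewrite /E !ffunE.
pose g (f : {ffun {set var n} -> bool}) : bpoly n := [set m | f m].
have ginj : injective g.
  move=> f1 f2 H; apply/ffunP => m.
  by have := congr1 (fun s : bpoly n => m \in s) H; rewrite /g !inE.
have := inj_card_onto Einj (leq_card _ ginj) f.
case/codomP => p ->; exists p => x; by rewrite /E ffunE.
Qed.

Lemma null_ideal n (S : pred (bpoly n)) (p : bpoly n) :
  (forall x, [forall s : bpoly n, S s ==> ~~ ev s x] -> ev p x = false) ->
  in_ideal S p.
Proof.
move=> Hp.
have interp : forall f : {ffun {set var n} -> bool}, {q : bpoly n | forall x, ev q x = f x}.
  move=> f; case: (pickP (fun q : bpoly n => [forall x, ev q x == f x])) => [q /forallP Hq|none].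
    by exists q => x; apply/eqP.
  exfalso; have [q Hq] := ev_surj f; have := none q.
  by move/negbT/forallPn => [x]; rewrite Hq eqxx.
pose h := [ffun s : bpoly n => sval (interp [ffun x => ev p x && ([pick g | S g && ev g x] == Some s)])].
apply/existsP; exists h; apply/eqP; apply: ev_inj => x; rewrite ev_bcomb.
have Hh : forall s, ev (h s) x = ev p x && ([pick g | S g && ev g x] == Some s).
  by move=> s; rewrite /h ffunE (svalP (interp _)) ffunE.
under eq_bigr => s _ do rewrite Hh.
case: pickP => [g /andP [Sg eg]|none].
  rewrite (bigD1 g Sg) /= eqxx eg !andbT big1 ?addn0 ?oddb // => s /andP [_ ne].
  by rewrite (inj_eq (@Some_inj _)) eq_sym (negbTE ne) andbF.
rewrite big1 //; last by move=> s _; rewrite andbF.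
rewrite /=; apply: Hp; apply/forallP => s; apply/implyP => Ss; apply/negP => es.
by have := none s; rewrite Ss es.
Qed.

Lemma rk_inj n : injective (@rk n).
Proof.
move=> [i j] [i' j']; rewrite /rk /= => H.
have [e1 e2] : (i : nat) = i' /\ (j : nat) = j'.
  move: H (ltn_ord i) (ltn_ord i') (ltn_ord j) (ltn_ord j').
  move: (i : nat) (i' : nat) (j : nat) (j' : nat) => a a' b b'.
  by case: a => [|[|[|a]]]; case: a' => [|[|[|a']]] => /= H *; lia.
by congr pair; apply: val_inj.
Qed.

Lemma lex_total n (a b : bmon n) : a != b -> lexlt a b || lexlt b a.
Proof.
move=> ne.
have : ~~ [forall v, (v \in a) == (v \in b)].
  apply: contra ne => /forallP H; apply/eqP/setP => v; exact/eqP/H.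
case/forallPn => v0 Hv0.
pose D := (a :\: b) :|: (b :\: a).
have HD : forall v, (v \in D) = ((v \in a) != (v \in b)).
  by move=> v; rewrite !inE; case: (v \in a); case: (v \in b).
have Hv0D : v0 \in D by rewrite HD.
case: (arg_maxnP (fun v => rk v) Hv0D) => v Hv Hmax.
have Hw : forall w, rk v < rk w -> (w \in a) == (w \in b).
  move=> w lt; apply/negPn/negP => Hne.
  have : w \in D by rewrite HD Hne.
  move=> /Hmax => le; have le2 : rk w <= rk v by exact: le.
  by move: lt; rewrite ltnNge le2.
have Hv2 : v \in D by exact: Hv.
move: Hv2; rewrite HD; case Hb: (v \in b); case Ha: (v \in a) => // _.
  apply/orP; left; apply/existsP; exists v; rewrite Ha Hb /=.
  by apply/forallP => w; apply/implyP => lt; rewrite Hw.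
apply/orP; right; apply/existsP; exists v; rewrite Ha Hb /=.
by apply/forallP => w; apply/implyP => lt; rewrite eq_sym Hw.
Qed.

Lemma lex_trans n (a b c : bmon n) : lexlt a b -> lexlt b c -> lexlt a c.
Proof.
move=> /existsP [v1 /and3P [b1 a1 /forallP H1]] /existsP [v2 /and3P [c2 b2 /forallP H2]].
have H1' : forall w, rk v1 < rk w -> (w \in a) = (w \in b) by move=> w lt; apply/eqP; exact: (implyP (H1 w)).
have H2' : forall w, rk v2 < rk w -> (w \in b) = (w \in c) by move=> w lt; apply/eqP; exact: (implyP (H2 w)).
apply/existsP; case: (ltngtP (rk v1) (rk v2)) => cmp.
- exists v2; rewrite c2 H1' // b2 /=; apply/forallP => w; apply/implyP => lt.
  by rewrite H1' ?H2' //; apply: ltn_trans lt.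
- exists v1; rewrite -H2' // b1 a1 /=; apply/forallP => w; apply/implyP => lt.
  by rewrite H1' ?H2' //; apply: ltn_trans lt.
- by move: (rk_inj cmp) b2 => <-; rewrite b1.
Qed.

Lemma lead_seq n (s : seq (bmon n)) : s != [::] ->
  exists2 b, b \in s & forall c, c \in s -> (c == b) || lexlt c b.
Proof.
elim: s => [//|x s IH] _.
case: (altP (s =P [::])) => [->|ne].
  by exists x; rewrite ?inE // => c; rewrite inE => ->.
have [b bs Hb] := IH ne.
case: (altP (x =P b)) => [->|xb].
  by exists b; rewrite ?inE ?eqxx // => c; rewrite inE => /orP [->|/Hb].
have := lex_total xb; case/orP => lt.
  exists b; first by rewrite inE bs orbT.
  by move=> c; rewrite inE => /orP [/eqP ->|/Hb]; rewrite ?lt ?orbT.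
exists x; first by rewrite inE eqxx.
move=> c; rewrite inE => /orP [->//|/Hb /orP [/eqP ->|cb]]; first by rewrite lt orbT.
by rewrite (lex_trans cb lt) orbT.
Qed.

Lemma lead_ex n (p : bpoly n) : p != set0 -> exists b, is_lead p b.
Proof.
move=> ne.
have : enum p != [::].
  case/set0Pn: ne => m Hm; apply/eqP => E; by have := mem_enum p m; rewrite E Hm.
case/lead_seq => b; rewrite mem_enum => bp Hb.
exists b; rewrite /is_lead bp /=; apply/forallP => c; apply/implyP => cp.
by apply: Hb; rewrite mem_enum.
Qed.

Lemma badd0 n (p q : bpoly n) : badd p q = set0 -> p = q.
Proof.
move=> r0; apply/setP => m; have := congr1 (fun s : bpoly n => m \in s) r0.
rewrite !inE; by case: (m \in p); case: (m \in q).
Qed.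

Lemma var_cases n (v : var n) : [\/ v = Xv v.2, v = Yv v.2 | v = Tv v.2].
Proof.
case: v => [[k Hk] i] /=; rewrite /Xv /Yv /Tv.
case: k Hk => [|[|[|k]]] Hk //.
- by apply: Or31; congr pair; apply: val_inj; rewrite /= inordK.
- by apply: Or32; congr pair; apply: val_inj; rewrite /= inordK.
- by apply: Or33; congr pair; apply: val_inj; rewrite /= inordK.
Qed.

Theorem mainTheorem5 (n : nat) (F : {set {set 'I_n}}) (G : seq (bpoly n)) :
  fail_prone F ->
  groebner_basis (idealI F) G ->
  #|SM (idealI F)| = (#|(@phi n) @: F| ^ 3)%N ->
  Q3 F.
Proof.
move=> _ _ Hcard F1 F2 F3 H1 H2 H3; apply/negP => Hcov.
pose gens := [:: xiF (@Xv n) F; xiF (@Yv n) F; xiF (@Tv n) F; @omega n].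
pose V := [set x : {set var n} | [forall s : bpoly n, (s \in gens) ==> ~~ ev s x]].
have S1 : #|SM (idealI F)| <= #|V|.
  pose fT (T : {set bmon n}) : {set {set var n}} := [set x in V | ev T x].
  have inj : {in powerset (SM (idealI F)) &, injective fT}.
    move=> T1 T2; rewrite !inE => s1 s2 E.
    pose p := badd T1 T2.
    have Hp : forall x, x \in V -> ev p x = false.
      move=> x xV; have := congr1 (fun s : {set {set var n}} => x \in s) E.
      move: xV; rewrite /fT !in_set => -> /= E2; by rewrite ev_add E2 addbb.
    have pI : idealI F p.
      apply: null_ideal => x Hx; apply: Hp; rewrite inE; exact: Hx.
    apply: badd0; apply/eqP; apply/negPn/negP => ne.
    have [b Hb] := lead_ex ne.
    have bp : b \in p by case/andP: Hb.
    have bSM : b \in SM (idealI F).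
      have : (b \in T1) || (b \in T2).
        by move: bp; rewrite !inE => /orP [/andP [_ ->]|/andP [_ ->]] //; rewrite orbT.
      case/orP => bT; [exact: (subsetP s1) | exact: (subsetP s2)].
    move: bSM; rewrite inE => /negP; apply.
    apply/existsP; exists [ffun s => if s == [set b] then @bone n else @bzero n].
    apply/eqP; apply: ev_inj => x; rewrite ev_bcomb.
    have LPb : [exists f, idealI F f && [exists b', is_lead f b' && ([set b] == [set b'])]].
      apply/existsP; exists p; rewrite pI /=; apply/existsP; exists b; by rewrite Hb eqxx.
    rewrite (bigD1 [set b]) //= ffunE eqxx ev_one /= big1 ?addn0 ?oddb //.
    by move=> s /andP [_ ne']; rewrite ffunE (negbTE ne') ev_zero.
  have := card_in_imset inj; rewrite card_powerset => Ec.
  have sub : fT @: powerset (SM (idealI F)) \subset powerset V.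
    apply/subsetP => y /imsetP [T _ ->]; rewrite inE; apply/subsetP => x.
    by rewrite inE => /andP [].
  have := subset_leq_card sub; rewrite Ec card_powerset leq_exp2l //.
have S2 : #|V| < #|F| ^ 3.
  pose pi (x : {set var n}) := (partZ (@Xv n) x, partZ (@Yv n) x, partZ (@Tv n) x).
  have piinj : injective pi.
    move=> x y E; apply/setP => v.
    have [e1 e2 e3] : [/\ partZ (@Xv n) x = partZ (@Xv n) y, partZ (@Yv n) x = partZ (@Yv n) y & partZ (@Tv n) x = partZ (@Tv n) y].
      by case: E => -> -> ->.
    case: (var_cases v) => ->.
    - by have := congr1 (fun s : {set 'I_n} => v.2 \in s) e1; rewrite !inE.
    - by have := congr1 (fun s : {set 'I_n} => v.2 \in s) e2; rewrite !inE.
    - by have := congr1 (fun s : {set 'I_n} => v.2 \in s) e3; rewrite !inE.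
  pose t := (F1, F2, F3).
  have sub : pi @: V \subset (setX (setX F F) F) :\ t.
    apply/subsetP => y /imsetP [x]; rewrite inE => /forallP Hx ->.
    have ev0 : forall s, s \in gens -> ev s x = false.
      by move=> s sg; apply/negbTE; exact: (implyP (Hx s) sg).
    have gX : xiF (@Xv n) F \in gens by rewrite inE eqxx.
    have gY : xiF (@Yv n) F \in gens by rewrite !inE eqxx !orbT.
    have gT : xiF (@Tv n) F \in gens by rewrite !inE eqxx !orbT.
    have gO : omega n \in gens by rewrite !inE eqxx !orbT.
    move: (ev0 _ gX) (ev0 _ gY) (ev0 _ gT) (ev0 _ gO).
    rewrite !ev_xiF ev_omega => /negbFE hX /negbFE hY /negbFE hT /negbT/forallPn [i Hi].
    rewrite !inE hX hY hT andbT /= andbT.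
    apply/eqP => E; case: E => e1 e2 e3.
    have := subsetP Hcov i (in_setT i); rewrite -e1 -e2 -e3 !inE.
    by move: Hi; case: (Xv i \in x); case: (Yv i \in x); case: (Tv i \in x).
  have := subset_leq_card sub; rewrite card_imset //.
  have tin : t \in setX (setX F F) F by rewrite !inE H1 H2 H3.
  have := cardsD1 t (setX (setX F F) F); rewrite tin !cardsX add1n => Ec.
  rewrite (_ : #|F| ^ 3 = #|F| * #|F| * #|F|); last by rewrite (expnS _ 2) (expnS _ 1) expn1 mulnA.
  by rewrite Ec ltnS.
have S3 : #|(@phi n) @: F| = #|F|.
  apply: card_in_imset => A B _ _ E; apply/setP => i.
  by have := congr1 (fun f : {ffun 'I_n -> bool} => f i) E; rewrite /phi !ffunE.
move: (leq_ltn_trans S1 S2); by rewrite Hcard S3 ltnn.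
Qed.
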